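(* On race-free networks of the session calculus, justness coincides with strong fairness of components: for every path starting in a race-free network, the path is just if and only if it is SC-fair.
   Context: Session calculus. Fix sets of locations $p,q,r,\dots$, labels $\lambda,\mu$ and recursion variables $X,Y$. Threads: $P ::= \mathbf{end} \mid \bigoplus_{i\in I} p_i!\lambda_i;P_i \mid \sum_{i\in I} p_i?\lambda_i;P_i \mid X \mid \mu X.P$, with $I$ finite (nonempty for $\bigoplus$) and expressions $\mu X.X$, $\mu X.\mu Y.P$ excluded. Networks: $N ::= p[\![P]\!] \mid 0 \mid N\parallel N$; in a network all locations are distinct, all threads are closed, and every location named in a send or receive is a location of $N$. Thread states additionally allow the form $\langle q!\lambda\rangle;P$ (an output already selected); network states are built from located thread states likewise, taken modulo the structural congruence $\equiv$ (associativity, commutativity of $\parallel$, $N\parallel 0\equiv N$). The transition relation is the least relation closed under $\equiv$ containing: (choice) $p[\![\bigoplus_{i\in I}p_i!\lambda_i;P_i]\!]\parallel N \xrightarrow{\tau} p[\![\langle p_k!\lambda_k\rangle;P_k]\!]\parallel N$ for $k\in I$; (unfold) $p[\![\mu X.P]\!]\parallel N\xrightarrow{\tau} p[\![P\{\mu X.P/X\}]\!]\parallel N$; (comm) $p_k[\![\langle q!\lambda_k\rangle;Q]\!]\parallel q[\![\sum_{i\in I}p_i?\lambda_i;P_i]\!]\parallel N \xrightarrow{(p_k,\lambda_k,q)} p_k[\![Q]\!]\parallel q[\![P_k]\!]\parallel N$ for $k\in I$. For a transition $t$, $\mathrm{comp}(t)$ is the single location moving in a $\tau$-transition and $\{p,q\}$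 for a label $(p,\lambda,q)$; $t$ involves $p$ if $p\in\mathrm{comp}(t)$; $t,u$ are concurrent if $\mathrm{comp}(t)\cap\mathrm{comp}(u)=\emptyset$. A path is a network state with a maximal (infinite or ending in a state without outgoing transitions) sequence of transitions. SC: location $p$ is enabled in a state if some transition from it involves $p$; relentlessly enabled on a path if every suffix contains a state where it is enabled. A path $\pi$ is SC-fair if for every suffix $\pi'$ and every location relentlessly enabled on $\pi'$, $\pi'$ contains a transition involving that location. Justness: $\pi$ is just if for every suffix of $\pi$ starting in state $s$ and every transition $t$ enabled in $s$, that suffix contains a transition $u$ not concurrent with $t$. A network state has a race if $N\xrightarrow{(p,\lambda,r)}N'$ and $N\xrightarrow{(q,\mu,r)}N''$ with $p\neq q$ or $N'\neq N''$; a network is race-free if no network state reachable from it has a race. *)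

(* Defs.v *)
From Stdlib Require Import List ClassicalEpsilon.
Import ListNotations.

Set Implicit Arguments.

Section Calculus.

Variables (Loc Lbl Var : Type).

(* Thread states.  [TSend l] is  (+)_{i in I} p_i!lambda_i;P_i  and [TRecv l] is
   Sum_{i in I} p_i?lambda_i;P_i, the finite family being listed by [l].
   [TSel q a P] is the thread state <q!a>;P (an output already selected). *)
Inductive thread : Type :=
| TEnd : thread
| TSend : list (Loc * Lbl * thread) -> thread
| TRecv : list (Loc * Lbl * thread) -> thread
| TVar : Var -> thread
| TMu : Var -> thread -> thread
| TSel : Loc -> Lbl -> thread -> thread.

(* A network state: the located thread states, as a partial map from
   locations (distinct by construction) to thread states.  This representation
   is canonical for the structural congruence (assoc., comm., unit 0). *)
Definition net := Loc -> option thread.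

Definition finite_net (N : net) : Prop :=
  exists dom : list Loc, forall p, N p <> None -> In p dom.

(* Substitution P{R/X} (R will always be closed, so no capture can occur). *)
Definition var_eqb (x y : Var) : bool :=
  if excluded_middle_informative (x = y) then true else false.

Fixpoint subst (X : Var) (R : thread) (P : thread) : thread :=
  match P with
  | TEnd => TEnd
  | TSend l => TSend (map (fun '(q, a, Q) => (q, a, subst X R Q)) l)
  | TRecv l => TRecv (map (fun '(q, a, Q) => (q, a, subst X R Q)) l)
  | TVar Y => if var_eqb Y X then R else TVar Y
  | TMu Y Q => if var_eqb Y X then TMu Y Q else TMu Y (subst X R Q)
  | TSel q a Q => TSel q a (subst X R Q)
  end.

(* Transition labels: tau-transitions carry the (single) moving location;
   (p, a, q) is a communication of label a from p to q. *)
Inductive label : Type :=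
| LTau : Loc -> label
| LComm : Loc -> Lbl -> Loc -> label.

Definition comp (t : label) : list Loc :=
  match t with
  | LTau p => [p]
  | LComm p _ q => [p; q]
  end.

Definition involves (t : label) (p : Loc) : Prop := In p (comp t).

Definition concurrent (t u : label) : Prop :=
  forall p, In p (comp t) -> In p (comp u) -> False.

Inductive step : net -> label -> net -> Prop :=
| step_choice : forall (N N' : net) p l q a P,
    N p = Some (TSend l) -> In (q, a, P) l ->
    N' p = Some (TSel q a P) ->
    (forall r, r <> p -> N' r = N r) ->
    step N (LTau p) N'
| step_unfold : forall (N N' : net) p X P,
    N p = Some (TMu X P) ->
    N' p = Some (subst X (TMu X P) P) ->
    (forall r, r <> p -> N' r = N r) ->
    step N (LTau p) N'
| step_comm : forall (N N' : net) p q a Q l P,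
    p <> q ->
    N p = Some (TSel q a Q) ->
    N q = Some (TRecv l) -> In (p, a, P) l ->
    N' p = Some Q -> N' q = Some P ->
    (forall r, r <> p -> r <> q -> N' r = N r) ->
    step N (LComm p a q) N'.

Inductive reachable : net -> net -> Prop :=
| reach_refl : forall N, reachable N N
| reach_step : forall N l N' N'', step N l N' -> reachable N' N'' -> reachable N N''.

Definition has_race (N : net) : Prop :=
  exists p q r a b N' N'',
    step N (LComm p a r) N' /\ step N (LComm q b r) N'' /\ (p <> q \/ N' <> N'').

Definition race_free (N : net) : Prop :=
  forall N', reachable N N' -> ~ has_race N'.

(* Well-formedness of a (syntactic) thread: [bound] are the recursion variables
   in scope, [inN] the locations of the enclosing network. *)
Fixpoint thread_ok (inN : Loc -> Prop) (bound : list Var) (P : thread) : Prop :=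
  match P with
  | TEnd => True
  | TSend l =>
      l <> [] /\
      (fix go (l : list (Loc * Lbl * thread)) : Prop :=
         match l with
         | [] => True
         | (q, _, Q) :: l' => inN q /\ thread_ok inN bound Q /\ go l'
         end) l
  | TRecv l =>
      (fix go (l : list (Loc * Lbl * thread)) : Prop :=
         match l with
         | [] => True
         | (q, _, Q) :: l' => inN q /\ thread_ok inN bound Q /\ go l'
         end) l
  | TVar X => In X bound
  | TMu X Q =>
      match Q with
      | TVar Y => Y <> X
      | TMu _ _ => False
      | _ => True
      end /\ thread_ok inN (X :: bound) Q
  | TSel _ _ _ => False
  end.

Definition is_network (N : net) : Prop :=
  finite_net N /\
  forall p P, N p = Some P -> thread_ok (fun q => N q <> None) [] P.

(* Paths: states [pst i] and transitions [plab i] : pst i --> pst (i+1).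
   [plen = Some n]: finite path with n transitions, ending in pst n;
   [plen = None]: infinite path.  Values beyond the length are irrelevant. *)
Record path : Type := Path {
  pst : nat -> net;
  plab : nat -> label;
  plen : option nat
}.

Definition st_idx (pi : path) (i : nat) : Prop :=
  match plen pi with None => True | Some n => i <= n end.

Definition tr_idx (pi : path) (i : nat) : Prop :=
  match plen pi with None => True | Some n => i < n end.

Definition is_path (pi : path) : Prop :=
  (forall i, tr_idx pi i -> step (pst pi i) (plab pi i) (pst pi (S i))) /\
  (forall n, plen pi = Some n -> forall l N', ~ step (pst pi n) l N').

Definition enabled (p : Loc) (N : net) : Prop :=
  exists l N', step N l N' /\ involves l p.

Definition relentlessly_enabled (pi : path) (k : nat) (p : Loc) : Prop :=
  forall m, k <= m -> st_idx pi m ->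
    exists m', m <= m' /\ st_idx pi m' /\ enabled p (pst pi m').

Definition SC_fair (pi : path) : Prop :=
  forall k, st_idx pi k ->
  forall p, relentlessly_enabled pi k p ->
    exists j, k <= j /\ tr_idx pi j /\ involves (plab pi j) p.

Definition just (pi : path) : Prop :=
  forall k, st_idx pi k ->
  forall t N', step (pst pi k) t N' ->
    exists j, k <= j /\ tr_idx pi j /\ ~ concurrent (plab pi j) t.

End Calculus.

(* Main.v *)
Require Import Defs.
From Stdlib Require Import List Classical ClassicalEpsilon Lia Arith.
Import ListNotations.

Section H.
Variables (Loc Lbl Var : Type).
Notation net := (net Loc Lbl Var).
Notation path := (path Loc Lbl Var).

Lemma frame (N N' : net) l x : step N l N' -> ~ In x (comp l) -> N' x = N x.
Proof.
  intros Hs Hn; destruct Hs; simpl in Hn.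
  - apply H2; intro; subst; tauto.
  - apply H1; intro; subst; tauto.
  - apply H5; intro; subst; tauto.
Qed.

Lemma transfer (N N' M : net) t : step N t N' ->
  (forall x, In x (comp t) -> M x = N x) -> exists M', step M t M'.
Proof.
  intros Hs Hag.
  exists (fun x => if excluded_middle_informative (In x (comp t)) then N' x else M x).
  destruct Hs; simpl in Hag; [eapply step_choice|eapply step_unfold|eapply step_comm]; eauto;
  simpl; try (rewrite Hag; [eassumption|simpl; tauto]);
  try (destruct excluded_middle_informative as [_|n]; [assumption| exfalso; apply n; simpl; tauto]);
  try (intros; destruct excluded_middle_informative as [i|]; [exfalso; simpl in i; intuition congruence|reflexivity]).
Qed.

Lemma tr_st (pi : path) i : tr_idx pi i -> st_idx pi i.
Proof. unfold tr_idx, st_idx; destruct (plen pi); auto; lia. Qed.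

Lemma st_tr (pi : path) i j : i < j -> st_idx pi j -> tr_idx pi i.
Proof. unfold tr_idx, st_idx; destruct (plen pi); auto; lia. Qed.

Lemma tr_le (pi : path) i j : i <= j -> tr_idx pi j -> tr_idx pi i.
Proof. unfold tr_idx; destruct (plen pi); auto; lia. Qed.

Lemma unchanged (pi : path) k t : is_path pi -> forall m, k <= m -> st_idx pi m ->
  (forall i, k <= i < m -> concurrent (plab pi i) t) ->
  forall x, In x (comp t) -> pst pi m x = pst pi k x.
Proof.
  intros Hp m; induction m; intros Hkm Hm Hc x Hx.
  - assert (k = 0) by lia; subst; auto.
  - destruct (Nat.eq_dec k (S m)) as [e|ne]; [subst; auto|].
    assert (Htr : tr_idx pi m) by (apply st_tr with (S m); auto).
    rewrite (frame _ _ _ x (proj1 Hp m Htr)).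
    + apply IHm; auto. lia. apply tr_st; auto. intros; apply Hc; lia.
    + intro Hin. apply (Hc m) with x; auto. lia.
Qed.

Lemma reach_snoc (N M M' : net) l : reachable N M -> step M l M' -> reachable N M'.
Proof.
  intros Hr; induction Hr; intros.
  - eapply reach_step; eauto. apply reach_refl.
  - eapply reach_step; eauto.
Qed.

Lemma reach_path (pi : path) : is_path pi -> forall j, st_idx pi j -> reachable (pst pi 0) (pst pi j).
Proof.
  intros Hp j; induction j; intros Hj.
  - apply reach_refl.
  - assert (Htr : tr_idx pi j) by (apply st_tr with (S j); auto).
    eapply reach_snoc; [apply IHj, tr_st; auto | apply (proj1 Hp j Htr)].
Qed.

Lemma minimal (P : nat -> Prop) : (exists n, P n) -> exists n, P n /\ forall m, m < n -> ~ P m.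
Proof.
  intros [n Hn].
  assert (forall k, forall n, n <= k -> P n -> exists n, P n /\ forall m, m < n -> ~ P m).
  { induction k; intros n0 Hle Hn0.
    - exists n0; split; auto. intros; lia.
    - destruct (classic (exists m, m < n0 /\ P m)) as [[m [Hm Pm]]|Hno].
      + apply IHk with m; auto; lia.
      + exists n0; split; auto. intros m Hm Pm; apply Hno; eauto. }
  eauto.
Qed.

End H.

Theorem mainTheorem6 (Loc Lbl Var : Type) (N : net Loc Lbl Var) (pi : path Loc Lbl Var) :
  is_network N -> race_free N ->
  is_path pi -> pst pi 0 = N ->
  (just pi <-> SC_fair pi).
Proof.
  intros _ Hrf Hp H0. split.
  - intros J k Hk p Hrel.
    destruct (Hrel k (le_n k) Hk) as [m [Hkm [Hm [l [N' [Hst Hinv]]]]]].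
    destruct (J m Hm l N' Hst) as [j0 Hj0].
    destruct (minimal (fun j => m <= j /\ tr_idx pi j /\ ~ concurrent (plab pi j) l)
                (ex_intro _ j0 Hj0)) as [j [[Hmj [Htj Hnc]] Hmin]].
    assert (Hconc : forall i, m <= i < j -> concurrent (plab pi i) l).
    { intros i Hi; apply NNPP; intro Hn; apply (Hmin i); [lia|].
      split; [lia|split; auto]. apply tr_le with j; auto; lia. }
    assert (Hsame : forall x, In x (comp l) -> pst pi j x = pst pi m x).
    { apply unchanged; auto. apply tr_st; auto. }
    exists j; split; [lia|split; auto].
    assert (Hy : exists y, In y (comp (plab pi j)) /\ In y (comp l)).
    { apply NNPP; intro Hn; apply Hnc; intros y H1 H2; apply Hn; eauto. }
    destruct Hy as [y [Hy1 Hy2]].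
    pose proof (proj1 Hp j Htj) as Hsj.
    unfold involves in *.
    assert (Hrace : ~ has_race (pst pi j)).
    { apply Hrf; rewrite <- H0; apply reach_path; auto; apply tr_st; auto. }
    destruct (transfer _ _ _ _ _ (pst pi j) _ Hst Hsame) as [Mt HMt].
    set (M := pst pi j) in *. set (M2 := pst pi (S j)) in *. set (L := plab pi j) in *.
    clearbody M M2 L.
    destruct Hst as [? ? p1 ? ? ? ? H1 ? ? ? | ? ? p1 ? ? H1 ? ? | ? ? p1 q1 a Q l0 P0 Hne H1 H2 H3 ? ? ?];
      simpl in Hinv, Hy2.
    + destruct Hinv as [<-|[]]; destruct Hy2 as [<-|[]]; auto.
    + destruct Hinv as [<-|[]]; destruct Hy2 as [<-|[]]; auto.
    + rewrite <- Hsame in H1, H2 by (simpl; auto).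
      assert (In p1 (comp L) /\ In q1 (comp L)) as [Hb1 Hb2].
      { pose proof Hsj as Hsj0. destruct Hsj as [? ? p2 ? ? ? ? G1 ? ? ? | ? ? p2 ? ? G1 ? ? | ? ? p2 q2 a2 Q2 l2 P2 Gne G1 G2 G3 ? ? ?];
          simpl in Hy1.
        - destruct Hy1 as [<-|[]]; destruct Hy2 as [<-|[<-|[]]]; congruence.
        - destruct Hy1 as [<-|[]]; destruct Hy2 as [<-|[<-|[]]]; congruence.
        - simpl. destruct Hy1 as [<-|[<-|[]]]; destruct Hy2 as [<-|[<-|[]]]; try congruence.
          + rewrite H1 in G1; injection G1; intros; subst; auto.
          + destruct (classic (p2 = p1)) as [->|Hn]; [simpl; tauto|].
            exfalso; apply Hrace. exists p2, p1, q1, a2, a. do 2 eexists. split; [exact Hsj0|split; [exact HMt|left; exact Hn]]. }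
      destruct Hinv as [<-|[<-|[]]]; auto.
  - intros SC k Hk t N' Hst.
    destruct (classic (exists j, k <= j /\ tr_idx pi j /\ ~ concurrent (plab pi j) t)) as [H|H]; [exact H|exfalso].
    assert (Hconc : forall i, k <= i -> tr_idx pi i -> concurrent (plab pi i) t).
    { intros i H1 H2; apply NNPP; intro; apply H; eauto. }
    assert (exists p0, In p0 (comp t)) as [p0 Hp0] by (destruct t; simpl; eauto).
    assert (Hrel : relentlessly_enabled pi k p0).
    { intros m Hkm Hm. exists m; split; [lia|split; auto].
      destruct (transfer _ _ _ _ _ (pst pi m) _ Hst) as [M' HM'].
      { intros x Hx. apply (unchanged _ _ _ pi k t); auto.
        intros i Hi; apply Hconc; [lia|]. apply st_tr with m; auto; lia. }
      exists t, M'; split; auto. }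
    destruct (SC k Hk p0 Hrel) as [j [Hkj [Htj Hinv]]].
    exact (Hconc j Hkj Htj p0 Hinv Hp0).
Qed.
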